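(* Let $p\in(1,2)$ and $d=1$. Let $f:\Omega\times[0,T]\times\mathbb R\times\mathbb R^{k}\times(\mathbb L^1_\mu+\mathbb L^2_\mu)\to\mathbb R$ satisfy: (H1) for every $t,z,\psi$, $y\mapsto f(t,y,z,\psi)$ is continuous and $(f(t,y,z,\psi)-f(t,y',z,\psi))(y-y')\le\alpha|y-y'|^2$ for a constant $\alpha$; (H2) for every $r>0$, $(\omega,t)\mapsto\sup_{|y|\le r}|f(t,y,0,0)-f(t,0,0,0)|$ belongs to $L^1(\Omega\times[0,T],\mathbb P\otimes dt)$; (H3') $f$ is Lipschitz continuous in $z$ with constant $K$, and for each $(y,z,\psi,\phi)\in\mathbb R\times\mathbb R^k\times(\mathbb L^1_\mu+\mathbb L^2_\mu)^2$ there is a predictable process $\kappa=\kappa^{y,z,\psi,\phi}:\Omega\times[0,T]\times\mathcal U\to\mathbb R$ with $$f(t,y,z,\psi)-f(t,y,z,\phi)\le\int_{\mathcal U}(\psi(u)-\phi(u))\kappa^{y,z,\psi,\phi}_t(u)\mu(du),$$ and $\mathbb P\otimes\mathrm{Leb}\otimes\mu$-a.e., for all $(y,z,\psi,\phi)$: $-1\le\kappa^{y,z,\psi,\phi}_t(u)$ and $|\kappa^{y,z,\psi,\phi}_t(u)|\le\ell(u)$, where $\ell\in\mathbb L^\infty_\mu\cap\mathbb L^2_\mu$. Then $f$ satisfies (H1), (H2) and (H3): there exists a constant $K'$ such that for all $t,y$, all $z,z'\in\mathbb R^k$ and $\psi,\psi'\in\mathbb L^1_\mu+\mathbb L^2_\mu$,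 $$|f(t,y,z,\psi)-f(t,y,z',\psi')|\le K'\big(|z-z'|+\|\psi-\psi'\|_{\mathbb L^1_\mu+\mathbb L^2_\mu}\big);$$ in particular $f$ is Lipschitz continuous with respect to $\psi$.
   Context: $\mu$ is a $\sigma$-finite measure on $\mathcal U\subset\mathbb R^m\setminus\{0\}$ with $\int(1\wedge|u|^2)d\mu<\infty$; $(\Omega,\mathcal F,\mathbb P,\mathbb F)$ is a filtered probability space. For $q\ge1$, $\mathbb L^q_\mu$ is the set of measurable real functions on $\mathcal U$ with $\int|\phi|^qd\mu<\infty$, $\mathbb L^\infty_\mu$ the essentially bounded ones; $\|\phi\|_{\mathbb L^1_\mu+\mathbb L^2_\mu}=\inf\{\|\phi^1\|_{\mathbb L^1_\mu}+\|\phi^2\|_{\mathbb L^2_\mu}:\phi^1+\phi^2=\phi\}$ and $\mathbb L^1_\mu+\mathbb L^2_\mu$ is the space where this is finite; $\mathbb L^\infty_\mu\cap\mathbb L^2_\mu$ carries the norm $\max(\|\ell\|_{\mathbb L^\infty_\mu},\|\ell\|_{\mathbb L^2_\mu})$. *)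

(* Defs.v *)
From HB Require Import structures.
From mathcomp Require Import all_boot all_order all_algebra.
From mathcomp Require Import all_classical all_reals all_analysis.
Import Order.TTheory GRing.Theory Num.Theory.
Import numFieldNormedType.Exports.
Local Open Scope classical_set_scope.
Local Open Scope ring_scope.

Set Implicit Arguments.
Unset Strict Implicit.
Unset Printing Implicit Defensive.

(* Euclidean norm on R^k (row vectors) and squared Euclidean norm on R^m
   (m-tuples, which carry the Borel product sigma-algebra). *)
Definition eucl_rV (R : realType) (k : nat) (z : 'rV[R]_k) : R :=
  Num.sqrt (\sum_(i < k) z ord0 i ^+ 2).

Definition sqnorm_tuple (R : realType) (m : nat) (u : m.-tuple R) : R :=
  \sum_(i < m) tnth u i ^+ 2.

Definition zero_tuple (R : realType) (m : nat) : m.-tuple R :=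
  [tuple (0 : R) | _ < m].

Definition inLp (d : measure_display) (X : measurableType d) (R : realType)
  (mu : {measure set X -> \bar R}) (p : \bar R) (phi : X -> R) : Prop :=
  measurable_fun setT phi /\ ('N[mu]_p[EFin \o phi] < +oo)%E.

Definition L12norm (d : measure_display) (X : measurableType d) (R : realType)
  (mu : {measure set X -> \bar R}) (phi : X -> R) : \bar R :=
  ereal_inf [set x : \bar R | exists phi1 phi2 : X -> R,
     [/\ inLp mu 1%E phi1, inLp mu 2%:E phi2,
         (forall u, phi1 u + phi2 u = phi u) &
         x = ('N[mu]_1%E[EFin \o phi1] + 'N[mu]_2%:E[EFin \o phi2])%E]].

Definition inL12 (d : measure_display) (X : measurableType d) (R : realType)
  (mu : {measure set X -> \bar R}) (phi : X -> R) : Prop :=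
  (L12norm mu phi < +oo)%E.

Definition filtration (d : measure_display) (Omega : measurableType d)
  (R : realType) (T : R) (F : R -> set (set Omega)) : Prop :=
  (forall t, 0 <= t <= T -> sigma_algebra setT (F t) /\ F t `<=` measurable) /\
  (forall s t, 0 <= s -> s <= t -> t <= T -> F s `<=` F t).

Definition predictable_rects (d : measure_display) (Omega : measurableType d)
  (R : realType) (T : R) (F : R -> set (set Omega)) : set (set (Omega * R)) :=
  [set X | (exists s t (A : set Omega),
               [/\ 0 <= s, s < t, t <= T, F s A & X = A `*` `]s, t]])
        \/ (exists A : set Omega, F 0 A /\ X = A `*` [set 0])].

Definition predictable_U_rects (d : measure_display) (Omega : measurableType d)
  (R : realType) (m : nat) (T : R) (F : R -> set (set Omega))
  : set (set ((Omega * R) * m.-tuple R)) :=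
  [set X | exists (A : set (Omega * R)) (B : set (m.-tuple R)),
     [/\ <<s predictable_rects T F >> A, measurable B & X = A `*` B]].

Definition predictable_U (d : measure_display) (Omega : measurableType d)
  (R : realType) (m : nat) (T : R) (F : R -> set (set Omega))
  (kappa : Omega -> R -> m.-tuple R -> R) : Prop :=
  forall B : set R, measurable B ->
    <<s @predictable_U_rects d Omega R m T F >>
      (((setT `*` `[0, T]) `*` setT) `&`
        (fun x => kappa x.1.1 x.1.2 x.2) @^-1` B).

(* Main.v *)
Require Import Defs.
From HB Require Import structures.
From mathcomp Require Import all_boot all_order all_algebra.
From mathcomp Require Import all_classical all_reals all_analysis.
Import Order.TTheory GRing.Theory Num.Theory.
Import numFieldNormedType.Exports.
Local Open Scope classical_set_scope.
Local Open Scope ring_scope.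

From mathcomp Require Import ess_sup_inf measurable_realfun.
From mathcomp Require Import lra.

Section helpers.
Set Implicit Arguments.
Unset Strict Implicit.

Lemma ae_section d1 d2 (T1 : measurableType d1) (T2 : measurableType d2)
  (R : realType) (m1 : {measure set T1 -> \bar R})
  (m2 : {sigma_finite_measure set T2 -> \bar R}) (Q : T1 * T2 -> Prop) :
  {ae (m1 \x m2)%E, forall x, Q x} -> {ae m1, forall a, {ae m2, forall b, Q (a, b)}}.
Proof.
move=> [N [mN N0 sN]].
have mf := measurable_fun_xsection m2 mN.
have : ae_eq m1 setT (m2 \o xsection N) (cst 0%E).
  apply/(ae_eq_integral_abs m1 measurableT) => //.
  rewrite -N0 /product_measure1; apply: eq_integral => x _.
  by rewrite gee0_abs.
apply: filterS => a /(_ I) /= Ha.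
exists (xsection N a); split => //; first exact: measurable_xsection.
move=> b /= nQ; rewrite /xsection /=; apply/mem_set; exact: sN.
Qed.

Lemma pred_section d (Omega : measurableType d) (R : realType) (m : nat)
  (T : R) (F : R -> set (set Omega)) (kappa : Omega -> R -> m.-tuple R -> R) w t :
  predictable_U T F kappa -> 0 <= t <= T -> measurable_fun setT (kappa w t).
Proof.
move=> hk ht _ B mB; rewrite setTI.
have key : <<s @predictable_U_rects d Omega R m T F >> `<=`
    [set X : set ((Omega * R) * m.-tuple R) | measurable [set u | X ((w, t), u)]].
  move=> X0; apply; split.
    split.
    - exact: measurable0.
    - move=> A mA.
      exact: (@measurableD _ _ setT [set u | A (w, t, u)] measurableT mA).
    - move=> A mA.
      exact: (@bigcupT_measurable _ _ (fun k => [set u | A k (w, t, u)]) mA).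
  move=> X [A [B' [_ mB' ->]]] /=.
  have [At|At] := pselect (A (w, t)).
    rewrite [X in measurable X](_ : _ = B') //.
    by apply/seteqP; split => u /=; [case|].
  rewrite [X in measurable X](_ : _ = set0) //.
  by apply/seteqP; split => u /=; [case|].
have := key _ (hk B mB); rewrite /=.
congr measurable; apply/seteqP; split => u /=.
  by case.
move=> Bu; split => //; split => //; split => //.
Qed.

Lemma eqle (R : realType) (x y : \bar R) : x = y -> (x <= y)%E.
Proof. by move->. Qed.

Lemma intbound d (X : measurableType d) (R : realType)
  (mu : {measure set X -> \bar R}) (U : set X) (mU : measurable U)
  (g1 g2 ell h : X -> R)
  (h1 : inLp mu 1%E g1) (h2 : inLp mu 2%:E g2)
  (hli : inLp mu +oo%E ell) (hl2 : inLp mu 2%:E ell)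
  (mh : measurable_fun setT h)
  (hb : {ae mu, forall u, `|h u| <= (`|g1 u| + `|g2 u|) * ell u}) :
  (\int[mu]_(u in U) (h u)%:E <=
     'N[mu]_+oo[EFin \o ell] * 'N[mu]_1[EFin \o g1] +
     'N[mu]_2%:E[EFin \o ell] * 'N[mu]_2%:E[EFin \o g2])%E.
Proof.
case: h1 => mg1 _; case: h2 => mg2 _; case: hli => ml Nlfin; case: hl2 => _ _.
have Nfin : ('N[mu]_+oo[EFin \o ell])%E \is a fin_num.
  by rewrite ge0_fin_numE ?Lnorm_ge0.
set c := fine ('N[mu]_+oo[EFin \o ell])%E.
have c0 : 0 <= c by apply: fine_ge0; exact: Lnorm_ge0.
have hc : ('N[mu]_+oo[EFin \o ell])%E = c%:E by rewrite fineK.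
have ae_ell : {ae mu, forall u, `|ell u| <= c}.
  have : \forall x \ae mu, (`|(ell x)%:E| <= 'N[mu]_+oo[EFin \o ell])%E.
    rewrite unlock /=; case: ifPn => [mu0|mu0].
      by have := ess_sup_ge mu (abse \o (EFin \o ell)).
    apply: measure0_ae; apply/eqP; rewrite eq_le measure_ge0 andbT leNgt.
    exact: mu0.
  by apply: filterS => x; rewrite hc abse_EFin lee_fin.
have mhU : measurable_fun U h := measurable_funS measurableT (@subsetT _ U) mh.
have mg1' : measurable_fun setT (fun x => `|g1 x| * `|ell x|).
  by apply: measurable_funM; apply: measurableT_comp.
have mg2' : measurable_fun setT (fun x => `|g2 x| * `|ell x|).
  by apply: measurable_funM; apply: measurableT_comp.
apply: (le_trans (lee_abs _)).
apply: (le_trans (le_abse_integral mu mU _)).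
  exact/measurable_EFinP.
apply: (@le_trans _ _ (\int[mu]_(u in U) ((`|g1 u| * `|ell u|)%:E +
                                         (`|g2 u| * `|ell u|)%:E))%E).
  apply: (ae_ge0_le_integral mU).
  - by move=> x _; exact: abse_ge0.
  - apply: (measurableT_comp (@abse_measurable _ setT)).
    exact/measurable_EFinP.
  - by move=> x _; rewrite -EFinD lee_fin addr_ge0 // mulr_ge0.
  - apply: emeasurable_funD; apply/measurable_EFinP;
      exact: (measurable_funS measurableT (@subsetT _ U)).
  - apply: filterS hb => x hx _; rewrite abse_EFin -EFinD lee_fin.
    rewrite -mulrDl; apply: (le_trans hx); apply: ler_wpM2l.
      by rewrite addr_ge0.
    exact: ler_norm.
have m1U : measurable_fun U (fun x => (`|g1 x| * `|ell x|)%:E).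
  apply/measurable_EFinP; exact: (measurable_funS measurableT (@subsetT _ U)).
have m2U : measurable_fun U (fun x => (`|g2 x| * `|ell x|)%:E).
  apply/measurable_EFinP; exact: (measurable_funS measurableT (@subsetT _ U)).
have n1U : forall x, U x -> (0 <= (`|g1 x| * `|ell x|)%:E)%E.
  by move=> x _; rewrite lee_fin mulr_ge0.
have n2U : forall x, U x -> (0 <= (`|g2 x| * `|ell x|)%:E)%E.
  by move=> x _; rewrite lee_fin mulr_ge0.
rewrite (ge0_integralD mu mU n1U m1U n2U m2U).
apply: leeD.
- apply: le_trans (ge0_subset_integral mu mU measurableT _ _ (@subsetT _ U)) _.
  + exact/measurable_EFinP.
  + by move=> x _; rewrite lee_fin mulr_ge0.
  apply: (@le_trans _ _ (\int[mu]_x ((`|g1 x|)%:E * c%:E))%E).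
    apply: (ae_ge0_le_integral measurableT).
    + by move=> x _; rewrite lee_fin mulr_ge0.
    + exact/measurable_EFinP.
    + by move=> x _; rewrite -EFinM lee_fin mulr_ge0.
    + apply/measurable_EFinP; apply: measurable_funM => //.
      exact: measurableT_comp.
    + apply: filterS ae_ell => x hx _; rewrite -EFinM lee_fin.
      by apply: ler_wpM2l.
  have mg1E : measurable_fun setT (fun x => (`|g1 x|)%:E).
    by apply/measurable_EFinP; exact: measurableT_comp.
  rewrite (ge0_integralZr mu measurableT mg1E); last 2 first.
    by move=> x _; rewrite lee_fin.
    by rewrite lee_fin.
  rewrite hc Lnorm1 [X in (_ <= X)%E]muleC.
  rewrite (_ : (\int[mu]_x `|(EFin \o g1) x|)%E = (\int[mu]_x (`|g1 x|)%:E)%E).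
    exact: le_refl.
  by apply: eq_integral => x _ /=; rewrite ?abse_EFin.
- apply: le_trans (ge0_subset_integral mu mU measurableT _ _ (@subsetT _ U)) _.
  + exact/measurable_EFinP.
  + by move=> x _; rewrite lee_fin mulr_ge0.
  have := @hoelder _ _ _ mu g2 ell 2 2 mg2 ml (ltr0Sn _ 1) (ltr0Sn _ 1).
  rewrite Lnorm1 muleC => H; apply: le_trans (H _).
    apply: eqle; apply: eq_integral => x _.
    by rewrite /= normrM.
  by rewrite [RHS](splitr 1) div1r.
Qed.

Lemma inf_bound (R : realType) (S : set (\bar R)) (a C : R) : 0 < C ->
  (forall x, S x -> (a%:E <= C%:E * x)%E) -> (a%:E <= C%:E * ereal_inf S)%E.
Proof.
move=> C0 H; rewrite -lee_pdivrMl //.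
apply: le_ereal_inf_tmp => x Sx; rewrite lee_pdivrMl //; exact: H.
Qed.

End helpers.

Theorem lemma4
  (R : realType) (p : R) (hp : 1 < p < 2) (T : R) (hT : 0 < T)
  (dO : measure_display) (Omega : measurableType dO)
  (P : probability Omega R) (F : R -> set (set Omega))
  (hF : filtration T F)
  (m k : nat) (U : set (m.-tuple R)) (mU : measurable U)
  (hU0 : ~ U (zero_tuple R m))
  (mu : {sigma_finite_measure set (m.-tuple R) -> \bar R})
  (mu_on_U : mu (~` U) = 0%E)
  (levy : (\int[mu]_(u in U) (Num.min 1 (sqnorm_tuple u))%:E < +oo)%E)
  (f : Omega -> R -> R -> 'rV[R]_k -> (m.-tuple R -> R) -> R)
  (* (H1) *)
  (H1 : exists alpha : R, forall w t z psi, 0 <= t <= T -> inL12 mu psi ->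
      continuous (fun y => f w t y z psi) /\
      forall y y', (f w t y z psi - f w t y' z psi) * (y - y') <= alpha * (y - y') ^+ 2)
  (* (H2) *)
  (H2 : forall r : R, 0 < r ->
      (P \x lebesgue_measure)%E.-integrable (setT `*` `[0, T])
        (fun x => ereal_sup [set (`|f x.1 x.2 y 0 (fun _ => 0) - f x.1 x.2 0 0 (fun _ => 0)|)%:E
                            | y in [set y : R | `|y| <= r]]))
  (* (H3') *)
  (H3z : exists K : R, forall w t y z z' psi, 0 <= t <= T -> inL12 mu psi ->
      `|f w t y z psi - f w t y z' psi| <= K * eucl_rV (z - z'))
  (H3k : exists (ell : m.-tuple R -> R)
           (kappa : R -> 'rV[R]_k -> (m.-tuple R -> R) -> (m.-tuple R -> R) ->
                    Omega -> R -> m.-tuple R -> R),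
      [/\ inLp mu +oo%E ell, inLp mu 2%:E ell,
          (forall y z psi phi, inL12 mu psi -> inL12 mu phi ->
             predictable_U T F (kappa y z psi phi) /\
             forall w t, 0 <= t <= T ->
               ((f w t y z psi - f w t y z phi)%:E <=
                \int[mu]_(u in U) ((psi u - phi u) * kappa y z psi phi w t u)%:E)%E) &
          {ae ((P \x lebesgue_measure) \x mu)%E,
             forall x : (Omega * R) * m.-tuple R, 0 <= x.1.2 <= T ->
               forall y z psi phi, inL12 mu psi -> inL12 mu phi ->
                 -1 <= kappa y z psi phi x.1.1 x.1.2 x.2 /\
                 `|kappa y z psi phi x.1.1 x.1.2 x.2| <= ell x.2}]) :
  (* conclusion: (H1), (H2) and (H3) *)
  (exists alpha : R, forall w t z psi, 0 <= t <= T -> inL12 mu psi ->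
      continuous (fun y => f w t y z psi) /\
      forall y y', (f w t y z psi - f w t y' z psi) * (y - y') <= alpha * (y - y') ^+ 2) /\
  (forall r : R, 0 < r ->
      (P \x lebesgue_measure)%E.-integrable (setT `*` `[0, T])
        (fun x => ereal_sup [set (`|f x.1 x.2 y 0 (fun _ => 0) - f x.1 x.2 0 0 (fun _ => 0)|)%:E
                            | y in [set y : R | `|y| <= r]])) /\
  (exists K' : R,
      {ae (P \x lebesgue_measure)%E, forall x : Omega * R, 0 <= x.2 <= T ->
        forall y z z' psi psi', inL12 mu psi -> inL12 mu psi' ->
          ((`|f x.1 x.2 y z psi - f x.1 x.2 y z' psi'|)%:E <=
           K'%:E * ((eucl_rV (z - z'))%:E + L12norm mu (fun u => (psi u - psi' u)%R)))%E}).
Proof.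
split; first exact: H1.
split; first exact: H2.
case: H3z => K HK.
case: H3k => ell [kappa [hli hl2 hk hae]].
have Nifin : ('N[mu]_+oo[EFin \o ell])%E \is a fin_num.
  by rewrite ge0_fin_numE ?Lnorm_ge0 //; case: hli.
have N2fin : ('N[mu]_2%:E[EFin \o ell])%E \is a fin_num.
  by rewrite ge0_fin_numE ?Lnorm_ge0 //; case: hl2.
set cI := fine ('N[mu]_+oo[EFin \o ell])%E.
set c2 := fine ('N[mu]_2%:E[EFin \o ell])%E.
have cI0 : 0 <= cI by apply: fine_ge0; exact: Lnorm_ge0.
have c20 : 0 <= c2 by apply: fine_ge0; exact: Lnorm_ge0.
have hcI : ('N[mu]_+oo[EFin \o ell])%E = cI%:E by rewrite fineK.
have hc2 : ('N[mu]_2%:E[EFin \o ell])%E = c2%:E by rewrite fineK.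
set C := cI + c2 + 1.
have C0 : 0 < C by rewrite /C ltr_wpDl // addr_ge0.
exists (`|K| + C).
apply: filterS (ae_section hae) => -[w t] /= Hsec ht y z z' psi psi' hpsi hpsi'.
have one : forall a b (phi1 phi2 : m.-tuple R -> R) (s : R),
    inL12 mu a -> inL12 mu b -> inLp mu 1%E phi1 -> inLp mu 2%:E phi2 ->
    `|s| = 1 ->
    (forall u, a u - b u = s * (phi1 u + phi2 u)) ->
    forall z0, f w t y z0 a - f w t y z0 b <=
      C * fine ('N[mu]_1%E[EFin \o phi1] + 'N[mu]_2%:E[EFin \o phi2])%E.
  move=> a b phi1 phi2 s ha hb h1 h2 hs hab z0.
  have [pk hint] := hk y z0 a b ha hb.
  have mk : measurable_fun setT (kappa y z0 a b w t) := pred_section w pk ht.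
  have := hint w t ht.
  rewrite (eq_integral (fun u => ((s * (phi1 u + phi2 u)) * kappa y z0 a b w t u)%:E));
    last by move=> u _; rewrite hab.
  move=> H.
  have mh : measurable_fun setT
      (fun u => (s * (phi1 u + phi2 u)) * kappa y z0 a b w t u).
    apply: measurable_funM => //; apply: measurable_funM => //.
    apply: measurable_funD; [case: h1 | case: h2] => //.
  have hb' : {ae mu, forall u, `|(s * (phi1 u + phi2 u)) * kappa y z0 a b w t u|
                 <= (`|phi1 u| + `|phi2 u|) * ell u}.
    apply: filterS Hsec => u Hu.
    have [_ hku] := Hu ht y z0 a b ha hb.
    rewrite normrM normrM hs mul1r; apply: ler_pM => //.
    exact: ler_normD.
  have H' := intbound mU h1 h2 hli hl2 mh hb'.
  rewrite hcI hc2 in H'.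
  have N1fin : ('N[mu]_1%E[EFin \o phi1])%E \is a fin_num.
    by rewrite ge0_fin_numE ?Lnorm_ge0 //; case: h1.
  have N2'fin : ('N[mu]_2%:E[EFin \o phi2])%E \is a fin_num.
    by rewrite ge0_fin_numE ?Lnorm_ge0 //; case: h2.
  have n10 : 0 <= fine ('N[mu]_1%E[EFin \o phi1])%E.
    by apply: fine_ge0; exact: Lnorm_ge0.
  have n20 : 0 <= fine ('N[mu]_2%:E[EFin \o phi2])%E.
    by apply: fine_ge0; exact: Lnorm_ge0.
  move: H H' n10 n20.
  rewrite -(fineK N1fin) -(fineK N2'fin) /=.
  set n1 := fine _; set n2 := fine _ => H H' n10 n20.
  have := le_trans H H'; rewrite -!EFinM -EFinD lee_fin => H''.
  apply: (le_trans H''); rewrite /C; nra.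
have key : forall z0 a b, inL12 mu a -> inL12 mu b ->
    ((`|f w t y z0 a - f w t y z0 b|)%:E <= C%:E * L12norm mu (fun u => (a u - b u)%R))%E.
  move=> z0 a b ha hb; apply: inf_bound C0 _ => x [phi1 [phi2 [h1 h2 hsum ->]]].
  have N1fin : ('N[mu]_1%E[EFin \o phi1])%E \is a fin_num.
    by rewrite ge0_fin_numE ?Lnorm_ge0 //; case: h1.
  have N2'fin : ('N[mu]_2%:E[EFin \o phi2])%E \is a fin_num.
    by rewrite ge0_fin_numE ?Lnorm_ge0 //; case: h2.
  have Nsum : ('N[mu]_1%E[EFin \o phi1] + 'N[mu]_2%:E[EFin \o phi2])%E \is a fin_num.
    by rewrite fin_numD N1fin N2'fin.
  rewrite -(fineK Nsum) -EFinM lee_fin ler_norml; apply/andP; split.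
    rewrite lerNl opprB; apply: (one b a phi1 phi2 (-1)) => //.
      by rewrite normrN normr1.
    by move=> u; rewrite mulN1r hsum opprB.
  apply: (one a b phi1 phi2 1) => //; first by rewrite normr1.
  by move=> u; rewrite mul1r hsum.
have L0 : (0 <= L12norm mu (fun u => (psi u - psi' u)%R))%E.
  apply: le_ereal_inf_tmp => x [phi1 [phi2 [_ _ _ ->]]].
  by apply: adde_ge0; exact: Lnorm_ge0.
have e0 : 0 <= eucl_rV (z - z') by apply: sqrtr_ge0.
have HK1 := HK w t y z z' psi ht hpsi.
have key2 := key z' psi psi' hpsi hpsi'.
rewrite (_ : f w t y z psi - f w t y z' psi' =
  (f w t y z psi - f w t y z' psi) + (f w t y z' psi - f w t y z' psi'));
  last by rewrite addrA subrK.
apply: (le_trans (_ : _ <= (`|f w t y z psi - f w t y z' psi|)%:E +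
                          (`|f w t y z' psi - f w t y z' psi'|)%:E)%E).
  by rewrite -EFinD lee_fin ler_normD.
rewrite ge0_muleDr //; apply: leeD.
  rewrite -EFinM lee_fin; apply: (le_trans HK1); apply: ler_wpM2r => //.
  by rewrite (le_trans (ler_norm K)) // lerDl ltW.
apply: (le_trans key2); apply: lee_wpmul2r => //.
by rewrite lee_fin lerDr.
Qed.
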